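(* Assume that for every $\Phi\in\mathcal F_\Phi\setminus\mathcal I^*_\Phi$, \[ \max_{e,e'\in\mathcal{E}_{tr}} \sup_{u\in\mathcal{F}_{w}}|\mathbb{E}[ u\circ\Phi(\bm{x}^e)\,y^e]-\mathbb{E}[ u\circ\Phi(\bm{x}^{e'})\,y^{e'}]|>0 \ \text{ or }\ \max_{e,e'\in\mathcal{E}_{tr}}\sup_{u\in\mathcal{F}_{w}}|\mathbb{E}[\{ u\circ\Phi(\bm{x}^e)\}^2]-\mathbb{E}[\{ u\circ\Phi(\bm{x}^{e'})\}^2]|>0 . \] Then the feasible set of the FAIRM program (the set of $\Phi\in\mathcal F_\Phi$ satisfying the FAIRM constraints over $\mathcal E_{tr}$) equals $\mathcal I^*_\Phi$. If moreover $\mathcal I^*_\Phi\neq\emptyset$, then $w^{(\mathrm{FAIRM})}\circ\Phi^{(\mathrm{FAIRM})}=w^*\circ\Phi^*$.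
   Context: Let $\mathcal E_{all}$ be a finite set of environments and $\mathcal E_{tr}\subseteq\mathcal E_{all}$ the training environments; for each $e$, $(\bm x^e,y^e)\in\mathbb R^p\times\mathbb R$ has distribution $P^e$. Environment weights: $\alpha^*_e>0$ for $e\in\mathcal E_{all}$ (summing to one), and for training environments $\alpha_e=n_e/N_{tr}$ with $n_e$ the training sample size of $e$ and $N_{tr}=\sum_{e\in\mathcal E_{tr}}n_e$. $\mathcal F_\Phi$ is a class of representations $\Phi:\mathbb R^p\to\mathcal H$, $\mathcal F_w$ a class of functions $\mathcal H\to\mathbb R$. $\mathcal I^*_\Phi$ is the set of $\Phi\in\mathcal F_\Phi$ with $\max_{e,e'\in\mathcal E_{all}}\sup_{u\in\mathcal F_w}|\mathbb E[u\circ\Phi(\bm x^e)y^e]-\mathbb E[u\circ\Phi(\bm x^{e'})y^{e'}]|=0$ and $\max_{e,e'\in\mathcal E_{all}}\sup_{u\in\mathcal F_w}|\mathbb E[\{u\circ\Phi(\bm x^e)\}^2]-\mathbb E[\{u\circ\Phi(\bm x^{e'})\}^2]|=0$. Full-info FAIRM: $(w^*,\Phi^* )\in\arg\min_{w\in\mathcal F_w,\Phi\in\mathcal I^*_\Phi}\sum_{e\in\mathcal E_{all}}\alpha^*_e\mathbb E[(y^e-w\circ\Phi(\bm x^e))^2]$. FAIRM: $(w^{(\mathrm{FAIRM})},\Phi^{(\mathrm{FAIRM})})\in\arg\min_{w\in\mathcal F_w,\Phi\in\mathcal F_\Phi}\sum_{e\in\mathcal E_{tr}}\alpha_e\mathbb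 E[(y^e-w\circ\Phi(\bm x^e))^2]$ subject to $\max_{e,e'\in\mathcal E_{tr}}\sup_{u\in\mathcal F_w}|\mathbb E[u\circ\Phi(\bm x^e)y^e]-\mathbb E[u\circ\Phi(\bm x^{e'})y^{e'}]|=0$ and $\max_{e,e'\in\mathcal E_{tr}}\sup_{u\in\mathcal F_w}|\mathbb E[\{u\circ\Phi(\bm x^e)\}^2]-\mathbb E[\{u\circ\Phi(\bm x^{e'})\}^2]|=0$. *)

(* Defs.v *)
From HB Require Import structures.
From mathcomp Require Import all_boot all_order all_algebra.
From mathcomp Require Import all_classical all_reals all_analysis.
Set Implicit Arguments. Unset Strict Implicit. Unset Printing Implicit Defensive.
Import Order.TTheory GRing.Theory Num.Theory.
Local Open Scope classical_set_scope.
Local Open Scope ring_scope.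

Section FAIRM.
Context {R : realType} {d : measure_display} {Omega : measurableType d}.
Context {Env : finType} {p : nat} {H : Type}.
(* P e : the probability under which environment e is observed;
   (x e, y e) : the pair (x^e, y^e) with law P^e. *)
Variable P : Env -> probability Omega R.
Variable x : Env -> Omega -> 'rV[R]_p.
Variable y : Env -> Omega -> R.
Variable Fw : set (H -> R).

Definition Ex (e : Env) (f : Omega -> R) : \bar R :=
  (\int[P e]_w (f w)%:E)%E.

Definition momY (Phi : 'rV[R]_p -> H) (u : H -> R) (e : Env) : \bar R :=
  Ex e (fun w => u (Phi (x e w)) * y e w).

Definition mom2 (Phi : 'rV[R]_p -> H) (u : H -> R) (e : Env) : \bar R :=
  Ex e (fun w => u (Phi (x e w)) ^+ 2).

(* max_{e,e' in S} sup_{u in Fw} |m Phi u e - m Phi u e'|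
   (max over the finite set of pairs = its supremum) *)
Definition disc (S : {set Env})
    (m : ('rV[R]_p -> H) -> (H -> R) -> Env -> \bar R)
    (Phi : 'rV[R]_p -> H) : \bar R :=
  ereal_sup [set ereal_sup [set (`| m Phi u e - m Phi u e' |)%E | u in Fw]
            | e in [set e | e \in S] & e' in [set e | e \in S]].

Definition constr_set (FPhi : set ('rV[R]_p -> H)) (S : {set Env}) :
    set ('rV[R]_p -> H) :=
  [set Phi | FPhi Phi /\ disc S momY Phi = 0%E /\ disc S mom2 Phi = 0%E].

Definition Istar (FPhi : set ('rV[R]_p -> H)) := constr_set FPhi [set: Env].

Definition wrisk (S : {set Env}) (a : Env -> R) (w : H -> R)
    (Phi : 'rV[R]_p -> H) : \bar R :=
  (\sum_(e in S) ((a e)%:E * Ex e (fun o => ((y e o - w (Phi (x e o))) ^+ 2)%R)))%E.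

Definition argmin_pairs (C : set ('rV[R]_p -> H))
    (obj : (H -> R) -> ('rV[R]_p -> H) -> \bar R) :
    set ((H -> R) * ('rV[R]_p -> H)) :=
  [set wp | Fw wp.1 /\ C wp.2 /\
     forall w Phi, Fw w -> C Phi -> (obj wp.1 wp.2 <= obj w Phi)%E].

End FAIRM.

Definition alpha_tr {R : realType} {Env : finType} (Etr : {set Env})
    (n : Env -> nat) (e : Env) : R :=
  (n e)%:R / (\sum_(e' in Etr) n e')%:R.

(* Main.v *)
Require Import Defs.
From HB Require Import structures.
From mathcomp Require Import all_boot all_order all_algebra.
From mathcomp Require Import all_classical all_reals all_analysis.
From mathcomp Require Import lra ring.
Import measurable_realfun.
Import Order.TTheory GRing.Theory Num.Theory.
Local Open Scope classical_set_scope.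
Local Open Scope ring_scope.

Lemma sq_decomp (d : measure_display) (T : measurableType d) (R : realType)
  (mu : measure T R) (f g : T -> R) :
  measurable_fun setT f -> measurable_fun setT g ->
  mu.-integrable setT (fun o => (f o ^+ 2)%:E) ->
  mu.-integrable setT (fun o => (g o ^+ 2)%:E) ->
  mu.-integrable setT (fun o => (g o * f o)%:E) /\
  (\int[mu]_o ((f o - g o) ^+ 2)%:E =
   \int[mu]_o (f o ^+ 2)%:E + (-2)%:E * \int[mu]_o (g o * f o)%:E
   + \int[mu]_o (g o ^+ 2)%:E)%E.
Proof.
move=> mf mg if2 ig2.
have igf : mu.-integrable setT (fun o => (g o * f o)%:E).
  apply: (le_integrable _ _ _ (integrableD _ ig2 if2)) => //.
    by apply/(measurable_EFinP _ (fun o => g o * f o)); exact: measurable_funM.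
  move=> o _ /=; rewrite lee_fin.
  rewrite (ger0_norm (addr_ge0 (sqr_ge0 _) (sqr_ge0 _))).
  rewrite ler_norml; apply/andP; split; nra.
split => //.
rewrite -integralZl //= -integralD //; last exact: integrableZl.
rewrite -integralD //; last by apply: integrableD => //; exact: integrableZl.
apply: eq_integral => o _ /=.
rewrite -!EFinM -!EFinD; congr EFin; ring.
Qed.

Section Aux.
Context {R : realType} {d : measure_display} {Omega : measurableType d}.
Context {Env : finType} {p : nat} {H : Type}.
Variable P : Env -> probability Omega R.
Variable x : Env -> Omega -> 'rV[R]_p.
Variable y : Env -> Omega -> R.
Variable Fw : set (H -> R).
Variable FPhi : set ('rV[R]_p -> H).

Lemma disc_sub (m : ('rV[R]_p -> H) -> (H -> R) -> Env -> \bar R)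
  (S : {set Env}) Phi :
  S != finset.set0 -> disc Fw [set: Env] m Phi = 0%E -> disc Fw S m Phi = 0%E.
Proof.
move=> hS hall; apply/eqP; rewrite eq_le; apply/andP; split.
  rewrite -hall /disc; apply: ereal_sup_le => z [e _ [e' _ <-]].
  by exists e; rewrite /= ?in_setT //; exists e'; rewrite /= ?in_setT.
case: (pselect (Fw !=set0)) => [[u hu]|nFw].
  case/set0Pn: hS => e he.
  have h1 : (`|m Phi u e - m Phi u e| <=
     ereal_sup [set `|m Phi u' e - m Phi u' e| | u' in Fw])%E.
    by apply: ereal_sup_ubound; exists u.
  have h2 : (ereal_sup [set `|m Phi u' e - m Phi u' e| | u' in Fw]
     <= disc Fw S m Phi)%E.
    by apply: ereal_sup_ubound; exists e => //; exists e.
  exact: le_trans (le_trans h1 h2).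
have : (disc Fw [set: Env] m Phi <= -oo)%E.
  apply: ge_ereal_sup => z [e _ [e' _ <-]].
  apply: ge_ereal_sup => w [u hu _].
  by exfalso; apply: nFw; exists u.
by rewrite hall.
Qed.

Lemma disc_inv (m : ('rV[R]_p -> H) -> (H -> R) -> Env -> \bar R) Phi u e e' :
  disc Fw [set: Env] m Phi = 0%E -> Fw u ->
  m Phi u e \is a fin_num -> m Phi u e' \is a fin_num ->
  m Phi u e = m Phi u e'.
Proof.
move=> hall hu f1 f2.
have h1 : (`|m Phi u e - m Phi u e'| <=
   ereal_sup [set `|m Phi u' e - m Phi u' e'| | u' in Fw])%E.
  by apply: ereal_sup_ubound; exists u.
have h2 : (ereal_sup [set `|m Phi u' e - m Phi u' e'| | u' in Fw]
   <= disc Fw [set: Env] m Phi)%E.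
  by apply: ereal_sup_ubound; exists e; rewrite /= ?in_setT //; exists e'; rewrite /= ?in_setT.
have := le_trans h1 h2; rewrite hall.
rewrite -(fineK f1) -(fineK f2) -EFinB abse_EFin lee_fin normr_le0 subr_eq0.
by move/eqP ->.
Qed.

Hypothesis hmy : forall e, measurable_fun setT (y e).
Hypothesis hmu : forall e Phi u, FPhi Phi -> Fw u ->
     measurable_fun setT (fun o => u (Phi (x e o))).
Hypothesis hy2 : forall e, (P e).-integrable setT (fun o => ((y e o) ^+ 2)%:E).
Hypothesis hu2 : forall e Phi u, FPhi Phi -> Fw u ->
     (P e).-integrable setT (fun o => ((u (Phi (x e o))) ^+ 2)%:E).

Lemma Ex_risk e Phi w : FPhi Phi -> Fw w ->
  [/\ momY P x y Phi w e \is a fin_num, mom2 P x Phi w e \is a fin_num,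
      Ex P e (fun o => (y e o ^+ 2)%R) \is a fin_num &
  Ex P e (fun o => ((y e o - w (Phi (x e o))) ^+ 2)%R) =
  (Ex P e (fun o => (y e o ^+ 2)%R) + (-2)%:E * momY P x y Phi w e
   + mom2 P x Phi w e)%E].
Proof.
move=> hP hw.
have [ig eq] := @sq_decomp _ _ _ (P e) _ _ (hmy e) (hmu e _ _ hP hw) (hy2 e) (hu2 e _ _ hP hw).
split.
- exact: integrable_fin_num ig.
- exact: integrable_fin_num (hu2 e _ _ hP hw).
- exact: integrable_fin_num (hy2 e).
- exact: eq.
Qed.

Lemma wrisk_eq (S : {set Env}) (a : Env -> R) w Phi e0 :
  Istar P x y Fw FPhi Phi -> Fw w -> \sum_(e in S) a e = 1 ->
  wrisk P x y S a w Phi =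
  (\sum_(e in S) a e * fine (Ex P e (fun o => (y e o ^+ 2)%R)) +
   (-2 * fine (momY P x y Phi w e0) + fine (mom2 P x Phi w e0)))%:E.
Proof.
move=> [hP [h1 h2]] hw hsum.
rewrite /wrisk.
transitivity (\sum_(e in S) ((a e * (fine (Ex P e (fun o => (y e o ^+ 2)%R)) +
   (-2 * fine (momY P x y Phi w e0) + fine (mom2 P x Phi w e0))))%:E))%E.
  apply: eq_bigr => e _; rewrite EFinM; congr (_ * _)%E.
  have [f1 f2 f3 ->] := Ex_risk e _ _ hP hw.
  have [f1' f2' _ _] := Ex_risk e0 _ _ hP hw.
  rewrite (disc_inv _ _ _ e e0 h1 hw f1 f1') (disc_inv _ _ _ e e0 h2 hw f2 f2').
  rewrite -(fineK f3) -(fineK f1') -(fineK f2') /=.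
  by rewrite -EFinM -!EFinD addrA.
rewrite sumEFin; congr EFin.
under eq_bigr do rewrite mulrDr.
by rewrite big_split /= -mulr_suml hsum mul1r.
Qed.

End Aux.

Theorem proposition2 (R : realType) (d : measure_display)
  (Omega : measurableType d) (Env : finType) (p : nat) (H : Type)
  (P : Env -> probability Omega R)
  (x : Env -> Omega -> 'rV[R]_p) (y : Env -> Omega -> R)
  (FPhi : set ('rV[R]_p -> H)) (Fw : set (H -> R))
  (Etr : {set Env}) (n : Env -> nat) (alphastar : Env -> R) :
  Etr != finset.set0 ->
  (forall e, e \in Etr -> (0 < n e)%N) ->
  (forall e, 0 < alphastar e) ->
  \sum_(e : Env) alphastar e = 1 ->
  (* standing well-posedness: measurable variables with finite second moments *)
  (forall e, measurable_fun setT (y e)) ->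
  (forall e Phi u, FPhi Phi -> Fw u ->
     measurable_fun setT (fun o => u (Phi (x e o)))) ->
  (forall e, (P e).-integrable setT (fun o => ((y e o) ^+ 2)%:E)) ->
  (forall e Phi u, FPhi Phi -> Fw u ->
     (P e).-integrable setT (fun o => ((u (Phi (x e o))) ^+ 2)%:E)) ->
  (* identifiability assumption *)
  (forall Phi, FPhi Phi -> ~ Istar P x y Fw FPhi Phi ->
     (0 < disc Fw Etr (momY P x y) Phi)%E \/
     (0 < disc Fw Etr (mom2 P x) Phi)%E) ->
  constr_set P x y Fw FPhi Etr = Istar P x y Fw FPhi /\
  (Istar P x y Fw FPhi !=set0 ->
     argmin_pairs Fw (constr_set P x y Fw FPhi Etr)
       (wrisk P x y Etr (alpha_tr Etr n))
     = argmin_pairs Fw (Istar P x y Fw FPhi)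
       (wrisk P x y [set: Env] alphastar)).
Proof.
move=> hEtr hn hal hsum hmy hmu hy2 hu2 hid.
have part1 : constr_set P x y Fw FPhi Etr = Istar P x y Fw FPhi.
  apply/seteqP; split => Phi.
    move=> [hF [h1 h2]].
    case: (pselect (Istar P x y Fw FPhi Phi)) => // nI.
    by case: (hid Phi hF nI); rewrite ?h1 ?h2 ltxx.
  move=> [hF [h1 h2]]; split => //; split; exact: disc_sub.
split => // _.
have [e0 _] := set0Pn _ hEtr.
have hsum_tr : \sum_(e in Etr) alpha_tr (R:=R) Etr n e = 1.
  rewrite -mulr_suml -natr_sum divff // pnatr_eq0 -lt0n.
  case/set0Pn: hEtr => e he.
  by rewrite (bigD1 e) //= addn_gt0 hn.
have hsum_all : \sum_(e in (finset.setT : {set Env})) alphastar e = 1.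
  by rewrite -hsum; apply: eq_bigl => e; rewrite finset.in_setT.
rewrite part1; apply/seteqP; split => -[w Phi] /= [hw [hPhi hmin]];
  split => //; split => // w' Phi' hw' hPhi'; move: (hmin w' Phi' hw' hPhi').
  rewrite (wrisk_eq P x y Fw FPhi hmy hmu hy2 hu2 _ _ _ _ e0 hPhi hw hsum_tr).
  rewrite (wrisk_eq P x y Fw FPhi hmy hmu hy2 hu2 _ _ _ _ e0 hPhi' hw' hsum_tr).
  rewrite (wrisk_eq P x y Fw FPhi hmy hmu hy2 hu2 _ _ _ _ e0 hPhi hw hsum_all).
  rewrite (wrisk_eq P x y Fw FPhi hmy hmu hy2 hu2 _ _ _ _ e0 hPhi' hw' hsum_all).
  by rewrite !lee_fin !lerD2l.
rewrite (wrisk_eq P x y Fw FPhi hmy hmu hy2 hu2 _ _ _ _ e0 hPhi hw hsum_tr).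
rewrite (wrisk_eq P x y Fw FPhi hmy hmu hy2 hu2 _ _ _ _ e0 hPhi' hw' hsum_tr).
rewrite (wrisk_eq P x y Fw FPhi hmy hmu hy2 hu2 _ _ _ _ e0 hPhi hw hsum_all).
rewrite (wrisk_eq P x y Fw FPhi hmy hmu hy2 hu2 _ _ _ _ e0 hPhi' hw' hsum_all).
by rewrite !lee_fin !lerD2l.
Qed.
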